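(* Let $\mathcal{H}=\mathbb{C}^3$, written in block form $\mathbb{C}\oplus\mathbb{C}^2$. Let $Q=\{\pm I,\pm i\sigma_1,\pm i\sigma_2,\pm i\sigma_3\}\subset M_2(\mathbb{C})$ be the quaternion group and define the unitary representation $U(g)=\begin{pmatrix}1&0\\0&g\end{pmatrix}$, $g\in Q$, on $\mathbb{C}^3$. Fix $\lambda>0$ and let $T=\begin{pmatrix}2\lambda&0\\0&-\lambda I_{2}\end{pmatrix}$. Let $$M=\tfrac18 I+\alpha_1\begin{pmatrix}0&0\\0&\sigma_1\end{pmatrix}+\alpha_2\begin{pmatrix}0&0\\0&\sigma_2\end{pmatrix}+\alpha_3\begin{pmatrix}0&0\\0&\sigma_3\end{pmatrix}+\begin{pmatrix}0&\bar v^t\\ v&0\end{pmatrix},$$ where $\alpha_1,\alpha_2,\alpha_3\in\mathbb{R}$ and $v\in\mathbb{C}^2$ (a column vector, $\bar v^t$ its conjugate transpose) satisfy $\alpha_1\neq0$, $\alpha_2\neq0$, $\alpha_3\neq0$, $v\neq0$, and $M\geq 0$. Then the map $\mathsf{M}(g)=U(g)MU(g)^*$, $g\in Q$, is a $U$-covariant observable on $Q$, and the linear span of $\{\mathsf{M}(g):g\in Q\}$ equals the Hilbert–Schmidt orthogonal complement $T^\perp=\{L\in M_3(\mathbb{C}):\mathrm{tr}(TL)=0\}$. Hence $\mathsf{M}$ is a pure-state informationally complete observable with $8$ outcomes, the minimal number of outcomes of a pure-state informationally complete observable on $\mathbb{C}^3$.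
   Context: $\sigma_1,\sigma_2,\sigma_3$ are the Pauli matrices and $I$ the identity matrix. An observable with finite outcome set $\Omega$ is a map $\mathsf{M}$ from $\Omega$ to positive operators on $\mathcal{H}$ with $\sum_{x\in\Omega}\mathsf{M}(x)=I$. It is pure-state informationally complete (PIC) if for any two different pure states (rank-one projections) $\varrho_1\neq\varrho_2$ there is $x\in\Omega$ with $\mathrm{tr}(\varrho_1\mathsf{M}(x))\neq\mathrm{tr}(\varrho_2\mathsf{M}(x))$. An observable $\mathsf{M}$ on $\Omega=Q$ is $U$-covariant if $U(g)\mathsf{M}(x)U(g)^*=\mathsf{M}(gx)$ for all $g,x\in Q$. The space of $3\times3$ matrices carries the Hilbert–Schmidt inner product $\langle L_1,L_2\rangle=\mathrm{tr}(L_1^*L_2)$. *)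

(* Defs.v *)
(* The field of complex numbers is taken to be an arbitrary
   numClosedFieldType C (e.g. algC, or R[i] for a real closed R); the
   statement is purely algebraic, so this is a generalization of C = ℂ. *)
From HB Require Import structures.
From mathcomp Require Import all_boot all_order all_algebra.
Set Implicit Arguments. Unset Strict Implicit. Unset Printing Implicit Defensive.
Import Order.TTheory GRing.Theory Num.Theory.
Local Open Scope ring_scope.

Section Defs.
Variable C : numClosedFieldType.

Definition adjmx m n (A : 'M[C]_(m, n)) : 'M[C]_(n, m) := (map_mx Num.conj A)^T.

Definition psd n (A : 'M[C]_n) : Prop :=
  forall x : 'cV[C]_n, 0 <= (adjmx x *m A *m x) 0 0.

Definition pure_state n (rho : 'M[C]_n) : Prop :=
  adjmx rho = rho /\ rho *m rho = rho /\ \rank rho = 1%N.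

Definition mx2 (a b c d : C) : 'M[C]_2 :=
  \matrix_(i < 2, j < 2)
    if (i : nat) == 0%N then (if (j : nat) == 0%N then a else b)
    else (if (j : nat) == 0%N then c else d).

Definition sigma1 : 'M[C]_2 := mx2 0 1 1 0.
Definition sigma2 : 'M[C]_2 := mx2 0 (- 'i) 'i 0.
Definition sigma3 : 'M[C]_2 := mx2 1 0 0 (-1).

Definition Qgrp : seq 'M[C]_2 :=
  [:: 1%:M; - 1%:M; 'i *: sigma1; - ('i *: sigma1);
      'i *: sigma2; - ('i *: sigma2); 'i *: sigma3; - ('i *: sigma3)].

Definition Urep (g : 'M[C]_2) : 'M[C]_(1 + 2) := block_mx 1%:M 0 0 g.

Definition Tmx (lam : C) : 'M[C]_(1 + 2) :=
  block_mx (2 * lam)%:M 0 0 (- lam)%:M.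

Definition Mseed (a1 a2 a3 : C) (v : 'cV[C]_2) : 'M[C]_(1 + 2) :=
  (8%:R^-1)%:M
  + block_mx 0 0 0 (a1 *: sigma1)
  + block_mx 0 0 0 (a2 *: sigma2)
  + block_mx 0 0 0 (a3 *: sigma3)
  + block_mx 0 (adjmx v) v 0.

Definition Mobs (M : 'M[C]_(1 + 2)) (g : 'M[C]_2) : 'M[C]_(1 + 2) :=
  Urep g *m M *m adjmx (Urep g).

Definition observable n (Om : seq 'M[C]_2) (F : 'M[C]_2 -> 'M[C]_n) : Prop :=
  uniq Om /\ (forall x, x \in Om -> psd (F x)) /\ \sum_(x <- Om) F x = 1%:M.

Definition covariant n (Om : seq 'M[C]_2) (U : 'M[C]_2 -> 'M[C]_n)
    (F : 'M[C]_2 -> 'M[C]_n) : Prop :=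
  forall g x, g \in Om -> x \in Om -> U g *m F x *m adjmx (U g) = F (g *m x).

Definition PIC n (Om : seq 'M[C]_2) (F : 'M[C]_2 -> 'M[C]_n) : Prop :=
  forall rho1 rho2 : 'M[C]_n, pure_state rho1 -> pure_state rho2 ->
    rho1 <> rho2 -> exists2 x, x \in Om & \tr (rho1 *m F x) != \tr (rho2 *m F x).

End Defs.

(* Main.v *)
Require Import Defs.
From HB Require Import structures.
From mathcomp Require Import all_boot all_order all_algebra.
From mathcomp Require Import ring.
Import Order.TTheory GRing.Theory Num.Theory.
Local Open Scope ring_scope.
Set Implicit Arguments. Unset Strict Implicit. Unset Printing Implicit Defensive.
Section S.
Variable C : numClosedFieldType.
Local Notation M3 := 'M[C]_(1+2).
Definition mx3 (a b c d e f g h k : C) : M3 :=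
  \matrix_(i, j) nth 0 (nth [::] [:: [:: a; b; c]; [:: d; e; f]; [:: g; h; k]] i) j.
Definition o0 : 'I_(1+2) := lshift 2 (0 : 'I_1).
Definition o1 : 'I_(1+2) := rshift 1 (0 : 'I_2).
Definition o2 : 'I_(1+2) := rshift 1 (1 : 'I_2).

Lemma mx3_eta (A : M3) : A = mx3 (A o0 o0) (A o0 o1) (A o0 o2) (A o1 o0) (A o1 o1) (A o1 o2)
   (A o2 o0) (A o2 o1) (A o2 o2).
Proof.
apply/matrixP => i j; rewrite mxE.
case: i => [[|[|[|i]]] Hi] //; case: j => [[|[|[|j]]] Hj] //=; congr (A _ _); exact: val_inj.
Qed.

Lemma block_mx3 (A : 'M[C]_1) (B : 'M[C]_(1,2)) (D : 'M[C]_(2,1)) (E : 'M[C]_2) :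
  block_mx A B D E = mx3 (A 0 0) (B 0 0) (B 0 1) (D 0 0) (E 0 0) (E 0 1) (D 1 0) (E 1 0) (E 1 1).
Proof.
by rewrite [LHS]mx3_eta /o0 /o1 /o2 !block_mxEul !block_mxEur !block_mxEdl !block_mxEdr.
Qed.

Lemma mx3_mul a b c d e f g h k a' b' c' d' e' f' g' h' k' :
  mx3 a b c d e f g h k *m mx3 a' b' c' d' e' f' g' h' k' =
  mx3 (a*a' + b*d' + c*g') (a*b' + b*e' + c*h') (a*c'+b*f'+c*k')
      (d*a' + e*d' + f*g') (d*b' + e*e' + f*h') (d*c'+e*f'+f*k')
      (g*a' + h*d' + k*g') (g*b' + h*e' + k*h') (g*c'+h*f'+k*k').
Proof.
apply/matrixP => i j; rewrite !mxE !big_ord_recl big_ord0 !mxE /=.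
case: i => [[|[|[|i]]] Hi] //; case: j => [[|[|[|j]]] Hj] //=; ring.
Qed.

Lemma mx3_add a b c d e f g h k a' b' c' d' e' f' g' h' k' :
  mx3 a b c d e f g h k + mx3 a' b' c' d' e' f' g' h' k' =
  mx3 (a+a') (b+b') (c+c') (d+d') (e+e') (f+f') (g+g') (h+h') (k+k').
Proof.
apply/matrixP => i j; rewrite !mxE.
by case: i => [[|[|[|i]]] Hi] //; case: j => [[|[|[|j]]] Hj].
Qed.

Lemma mx3_scale x a b c d e f g h k :
  x *: mx3 a b c d e f g h k = mx3 (x*a) (x*b) (x*c) (x*d) (x*e) (x*f) (x*g) (x*h) (x*k).
Proof.
apply/matrixP => i j; rewrite !mxE.
by case: i => [[|[|[|i]]] Hi] //; case: j => [[|[|[|j]]] Hj].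
Qed.

Lemma mx3_adj a b c d e f g h k :
  adjmx (mx3 a b c d e f g h k) = mx3 a^* d^* g^* b^* e^* h^* c^* f^* k^*.
Proof.
apply/matrixP => i j; rewrite !mxE.
by case: i => [[|[|[|i]]] Hi] //; case: j => [[|[|[|j]]] Hj].
Qed.

Lemma mx3_scalar x : (x%:M : M3) = mx3 x 0 0 0 x 0 0 0 x.
Proof. by rewrite [LHS]mx3_eta !mxE. Qed.

Lemma mx3_0 : (0 : M3) = mx3 0 0 0 0 0 0 0 0 0.
Proof. by rewrite [LHS]mx3_eta !mxE. Qed.

Lemma mx3_tr a b c d e f g h k : \tr (mx3 a b c d e f g h k) = a + e + k.
Proof. by rewrite /mxtrace !big_ord_recl big_ord0 !mxE /= addr0 addrA. Qed.

Lemma mx3_eq a b c d e f g h k a' b' c' d' e' f' g' h' k' :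
  a = a' -> b = b' -> c = c' -> d = d' -> e = e' -> f = f' -> g = g' -> h = h' -> k = k' ->
  mx3 a b c d e f g h k = mx3 a' b' c' d' e' f' g' h' k'.
Proof. by move=> -> -> -> -> -> -> -> -> ->. Qed.

Lemma Hi : 'i * 'i = -1 :> C. Proof. by rewrite -expr2 sqrCi. Qed.


Lemma mx2_eq a b c d a' b' c' d' : a = a' -> b = b' -> c = c' -> d = d' ->
  mx2 a b c d = mx2 a' b' c' d' :> 'M[C]_2.
Proof. by move=> -> -> -> ->. Qed.

Lemma mx2_eta (A : 'M[C]_2) : A = mx2 (A 0 0) (A 0 1) (A 1 0) (A 1 1).
Proof.
apply/matrixP => i j; rewrite mxE.
case: i => [[|[|i]] Hi] //; case: j => [[|[|j]] Hj] //=; congr (A _ _); exact: val_inj.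
Qed.

Lemma mx2_scale x a b c d : x *: mx2 a b c d = mx2 (x*a) (x*b) (x*c) (x*d) :> 'M[C]_2.
Proof. by rewrite [LHS]mx2_eta !mxE. Qed.

Lemma mx2_opp a b c d : - mx2 a b c d = mx2 (-a) (-b) (-c) (-d) :> 'M[C]_2.
Proof. by rewrite [LHS]mx2_eta !mxE. Qed.

Lemma Urep_mx2 e f g h : Urep (mx2 e f g h) = mx3 1 0 0 0 e f 0 g h.
Proof. by rewrite /Urep block_mx3 !mxE. Qed.

Definition Qg : seq 'M[C]_2 :=
  [:: mx2 1 0 0 1; mx2 (-1) 0 0 (-1); mx2 0 'i 'i 0; mx2 0 (-'i) (-'i) 0;
      mx2 0 1 (-1) 0; mx2 0 (-1) 1 0; mx2 'i 0 0 (-'i); mx2 (-'i) 0 0 'i].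


Lemma QgE : Qgrp C = Qg.
Proof.
have e1 : (1%:M : 'M[C]_2) = mx2 1 0 0 1 by rewrite [LHS]mx2_eta !mxE.
rewrite /Qgrp /Qg /sigma1 /sigma2 /sigma3 e1 !mx2_scale !mx2_opp.
congr [:: _; _; _; _; _; _; _; _]; apply: mx2_eq; rewrite ?Hi; ring: Hi.
Qed.

Lemma Mseed_mx3 a1 a2 a3 (v : 'cV[C]_2) : Mseed a1 a2 a3 v =
  mx3 (8%:R^-1) (v 0 0)^* (v 1 0)^* (v 0 0) (8%:R^-1 + a3) (a1 - 'i * a2) (v 1 0) (a1 + 'i * a2) (8%:R^-1 - a3).
Proof.
rewrite /Mseed mx3_scalar !block_mx3 /sigma1 /sigma2 /sigma3 !mxE /= !mx3_add.
apply: mx3_eq; ring.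
Qed.

Lemma Mobs_mx3 m00 m01 m02 m10 m11 m12 m20 m21 m22 e f g h :
  Mobs (mx3 m00 m01 m02 m10 m11 m12 m20 m21 m22) (mx2 e f g h) =
  mx3 m00 (m01 * e^* + m02 * f^*) (m01 * g^* + m02 * h^*)
      (e * m10 + f * m20)
      ((e * m11 + f * m21) * e^* + (e * m12 + f * m22) * f^*)
      ((e * m11 + f * m21) * g^* + (e * m12 + f * m22) * h^*)
      (g * m10 + h * m20)
      ((g * m11 + h * m21) * e^* + (g * m12 + h * m22) * f^*)
      ((g * m11 + h * m21) * g^* + (g * m12 + h * m22) * h^*).
Proof.
rewrite /Mobs Urep_mx2 mx3_adj !mx3_mul; apply: mx3_eq; rewrite ?rmorph0 ?rmorph1; ring.
Qed.

Lemma c0 : (0 : C)^* = 0. Proof. exact: conjC0. Qed.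
Lemma c1 : (1 : C)^* = 1. Proof. exact: conjC1. Qed.
Lemma cN1 : (-1 : C)^* = -1. Proof. by apply: conj_Creal; rewrite rpredN rpred1. Qed.
Lemma ci : ('i : C)^* = - 'i. Proof. exact: conjCi. Qed.
Lemma cNi : (- 'i : C)^* = 'i. Proof. by rewrite -conjCi conjCK. Qed.
Ltac conj_simpl := rewrite ?c0 ?c1 ?cN1 ?ci ?cNi.

Lemma sum1 a1 a2 a3 (v : 'cV[C]_2) : \sum_(g <- Qgrp C) Mobs (Mseed a1 a2 a3 v) g = 1%:M.
Proof.
rewrite QgE /Qg !big_cons big_nil addr0 Mseed_mx3 !Mobs_mx3 !mx3_add mx3_scalar.
conj_simpl.
apply: mx3_eq; field: Hi; rewrite ?pnatr_eq0 //.
Qed.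

End S.
Unset Implicit Arguments.
Section S2.
Variable C : numClosedFieldType.
Ltac conj_simpl := rewrite ?c0 ?c1 ?cN1 ?ci ?cNi.
Local Notation M3 := 'M[C]_(1+2).

Let Hi : 'i * 'i = -1 :> C. Proof. by rewrite -expr2 sqrCi. Qed.

Lemma sum_index (s : seq 'M[C]_2) (F : 'M[C]_2 -> M3) (fs : seq C) : uniq s ->
  \sum_(g <- s) fs`_(index g s) *: F g = \sum_(i < size s) fs`_i *: F (nth 0 s i).
Proof.
move=> us; rewrite (big_nth 0) big_mkord; apply: eq_bigr => i _.
by rewrite index_uniq.
Qed.


Section Constr.
Variables (p0 q0 P0 Q0 : C).
Let n := p0 * P0 + q0 * Q0.
Definition al (z1 z2 zb1 zb2 : C) := (z1 * P0 + zb2 * q0) / n.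
Definition alb (z1 z2 zb1 zb2 : C) := (zb1 * p0 + z2 * Q0) / n.
Definition be (z1 z2 zb1 zb2 : C) := (z1 * Q0 - zb2 * p0) / n.
Definition beb (z1 z2 zb1 zb2 : C) := (zb1 * q0 - z2 * P0) / n.
Definition r0 z1 z2 zb1 zb2 := (al z1 z2 zb1 zb2 + alb z1 z2 zb1 zb2) / 2%:R.
Definition r3 z1 z2 zb1 zb2 := - 'i * (al z1 z2 zb1 zb2 - alb z1 z2 zb1 zb2) / 2%:R.
Definition r2 z1 z2 zb1 zb2 := (be z1 z2 zb1 zb2 + beb z1 z2 zb1 zb2) / 2%:R.
Definition r1 z1 z2 zb1 zb2 := - 'i * (be z1 z2 zb1 zb2 - beb z1 z2 zb1 zb2) / 2%:R.
End Constr.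

Definition dd (r : C -> C -> C -> C -> C) (l10 l20 l01 l02 cl10 cl20 cl01 cl02 : C) :=
  r ((l10 + cl01) / 2%:R) ((l20 + cl02) / 2%:R) ((cl10 + l01) / 2%:R) ((cl20 + l02) / 2%:R)
  + 'i * r (- 'i * (l10 - cl01) / 2%:R) (- 'i * (l20 - cl02) / 2%:R)
           ('i * (cl10 - l01) / 2%:R) ('i * (cl20 - l02) / 2%:R).

Definition ss (e1 e2 e3 : C) (a1 a2 a3 l00 l11 l12 l21 : C) :=
  (8%:R * l00 + e1 * ((l12 + l21) / 2%:R / a1) + e2 * ('i * (l12 - l21) / 2%:R / a2)
    + e3 * ((l11 - l00) / a3)) / 4%:R.

Lemma constr (a1 a2 a3 p0 q0 l00 l01 l02 l10 l11 l12 l20 l21 : C) :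
  a1 != 0 -> a2 != 0 -> a3 != 0 -> p0 * p0^* + q0 * q0^* != 0 ->
  let M := mx3 (8%:R^-1) p0^* q0^* p0 (8%:R^-1 + a3) (a1 - 'i * a2) q0 (a1 + 'i * a2) (8%:R^-1 - a3) in
  let d r := dd (r p0 q0 p0^* q0^*) l10 l20 l01 l02 l10^* l20^* l01^* l02^* in
  let s e1 e2 e3 := ss e1 e2 e3 a1 a2 a3 l00 l11 l12 l21 in
  let fs := [:: (s 1 1 1 + d r0) / 2%:R; (s 1 1 1 - d r0) / 2%:R;
                (s 1 (-1) (-1) + d r1) / 2%:R; (s 1 (-1) (-1) - d r1) / 2%:R;
                (s (-1) 1 (-1) + d r2) / 2%:R; (s (-1) 1 (-1) - d r2) / 2%:R;
                (s (-1) (-1) 1 + d r3) / 2%:R; (s (-1) (-1) 1 - d r3) / 2%:R] in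
  mx3 l00 l01 l02 l10 l11 l12 l20 l21 (2%:R * l00 - l11) =
  \sum_(i < 8) fs`_i *: Mobs M (nth 0 (Qg C) i).
Proof.
move=> a10 a20 a30 n0 M d s fs.
rewrite !big_ord_recl big_ord0 /= /fs /d /s /M.
rewrite addr0 !Mobs_mx3 !mx3_scale !mx3_add.
conj_simpl.
rewrite /dd /ss /r0 /r1 /r2 /r3 /al /alb /be /beb.
apply: mx3_eq; field: Hi; by apply/and4P; split.
Qed.


Lemma constr_ex (a1 a2 a3 p0 q0 l00 l01 l02 l10 l11 l12 l20 l21 : C) :
  a1 != 0 -> a2 != 0 -> a3 != 0 -> p0 * p0^* + q0 * q0^* != 0 ->
  exists fs : seq C,
  mx3 l00 l01 l02 l10 l11 l12 l20 l21 (2%:R * l00 - l11) =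
  \sum_(i < 8) fs`_i *: Mobs (mx3 (8%:R^-1) p0^* q0^* p0 (8%:R^-1 + a3) (a1 - 'i * a2) q0 (a1 + 'i * a2) (8%:R^-1 - a3)) (nth 0 (Qg C) i).
Proof. move=> a10 a20 a30 n0; eexists; exact: (constr a1 a2 a3 p0 q0 l00 l01 l02 l10 l11 l12 l20 l21 a10 a20 a30 n0). Qed.

Lemma n10 : ((1:C) == 0) = false. Proof. exact: negbTE (oner_neq0 _). Qed.
Lemma nN10 : ((-1:C) == 0) = false. Proof. by rewrite oppr_eq0 n10. Qed.
Lemma ni0 : (('i:C) == 0) = false. Proof. exact: negbTE (neq0Ci _). Qed.
Lemma nNi0 : ((-'i:C) == 0) = false. Proof. by rewrite oppr_eq0 ni0. Qed.
Lemma n1N1 : ((1:C) == -1) = false.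
Proof. by rewrite -addr_eq0 -mulr2n mulrn_eq0 n10. Qed.
Lemma n1i : ((1:C) == 'i) = false.
Proof. apply/negbTE/eqP => H; have := Hi; rewrite -H mulr1 => /eqP; by rewrite n1N1. Qed.
Lemma n1Ni : ((1:C) == -'i) = false.
Proof. apply/negbTE/eqP => H; have := Hi; rewrite -mulrNN -H mulr1 => /eqP; by rewrite n1N1. Qed.
Lemma nN1i : ((-1:C) == 'i) = false. Proof. by rewrite eqr_oppLR n1Ni. Qed.
Lemma nN1Ni : ((-1:C) == -'i) = false. Proof. by rewrite eqr_opp n1i. Qed.
Lemma niNi : (('i:C) == -'i) = false.
Proof. by rewrite -addr_eq0 -mulr2n mulrn_eq0 ni0. Qed.

Lemma uniqQg : uniq (Qg C).
Proof.
have fl := (n10, nN10, ni0, nNi0, n1N1, n1i, n1Ni, nN1i, nN1Ni, niNi).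
have fr := (etrans (eq_sym _ _) n10, etrans (eq_sym _ _) nN10, etrans (eq_sym _ _) ni0, etrans (eq_sym _ _) nNi0, etrans (eq_sym _ _) n1N1, etrans (eq_sym _ _) n1i, etrans (eq_sym _ _) n1Ni, etrans (eq_sym _ _) nN1i, etrans (eq_sym _ _) nN1Ni, etrans (eq_sym _ _) niNi).
apply: (@map_uniq _ _ (fun g : 'M[C]_2 => (g 0 0, g 0 1))).
rewrite /= !mxE /= !inE !xpair_eqE.
by rewrite ?fl ?fr ?eqxx.
Qed.

Lemma span_rev (lam a1 a2 a3 : C) (v : 'cV[C]_2) (L : M3) :
  lam != 0 -> a1 != 0 -> a2 != 0 -> a3 != 0 -> v != 0 ->
  \tr (Tmx lam *m L) = 0 ->
  exists c : 'M[C]_2 -> C, L = \sum_(g <- Qgrp C) c g *: Mobs (Mseed a1 a2 a3 v) g.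
Proof.
move=> l0 a10 a20 a30 v0 tr0.
have n0 : v 0 0 * (v 0 0)^* + v 1 0 * (v 1 0)^* != 0.
  rewrite paddr_eq0 ?mul_conjC_ge0 // !mul_conjC_eq0; apply: contra v0 => /andP[/eqP e1 /eqP e2].
  apply/eqP/matrixP => i j; rewrite !mxE (ord1 j).
  by case: i => [[|[|i]] Hi0] //; [rewrite -e1 | rewrite -e2]; congr (v _ _); apply: val_inj.
have e22 : L o2 o2 = 2%:R * L o0 o0 - L o1 o1.
  move: tr0; rewrite (mx3_eta L) /Tmx block_mx3 !mxE /= mx3_mul mx3_tr !mulr1n !mulr0n => H; have {}H : @eq C _ _ := H.
  have : lam * ((2%:R * L o0 o0 - L o1 o1) - L o2 o2) = 0 :> C by rewrite -[RHS]H; ring.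
  by move/eqP; rewrite mulf_eq0 (negbTE l0) /= subr_eq0 eq_sym => /eqP.
case: (constr_ex a1 a2 a3 (v 0 0) (v 1 0) (L o0 o0) (L o0 o1) (L o0 o2) (L o1 o0) (L o1 o1) (L o1 o2) (L o2 o0) (L o2 o1) a10 a20 a30 n0) => fs E.
exists (fun g => fs`_(index g (Qg C))).
rewrite {1}(mx3_eta L) e22 QgE sum_index ?uniqQg // Mseed_mx3.
exact: E.
Qed.
End S2.
Set Implicit Arguments.
Section S3.
Ltac conj_simpl := rewrite ?c0 ?c1 ?cN1 ?ci ?cNi.
Variable C : numClosedFieldType.
Local Notation M3 := 'M[C]_(1+2).

Lemma adjmx_mul m n p (A : 'M[C]_(m,n)) (B : 'M[C]_(n,p)) : adjmx (A *m B) = adjmx B *m adjmx A.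
Proof. by rewrite /adjmx map_mxM trmx_mul. Qed.

Lemma adjmxK m n (A : 'M[C]_(m,n)) : adjmx (adjmx A) = A.
Proof. by apply/matrixP => i j; rewrite !mxE conjCK. Qed.

Lemma psd_conj n (M U : 'M[C]_n) : psd M -> psd (U *m M *m adjmx U).
Proof.
move=> H x; have := H (adjmx U *m x).
by rewrite adjmx_mul adjmxK !mulmxA.
Qed.

Lemma Urep_mul (g x : 'M[C]_2) : Urep g *m Urep x = Urep (g *m x).
Proof. by rewrite /Urep mulmx_block !mulmx0 !mul0mx !addr0 !add0r mulmx1. Qed.

Lemma cov (M : M3) g x : Urep g *m Mobs M x *m adjmx (Urep g) = Mobs M (g *m x).
Proof. by rewrite /Mobs -Urep_mul !adjmx_mul !mulmxA. Qed.

Lemma trQ lam a1 a2 a3 (v : 'cV[C]_2) g : g \in Qgrp C ->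
  \tr (Tmx lam *m Mobs (Mseed a1 a2 a3 v) g) = 0.
Proof.
move=> Hg; apply/eqP; move: g Hg; apply/allP.
rewrite QgE Mseed_mx3 /Tmx block_mx3 !mxE /= !mulr1n !mulr0n.
rewrite !Mobs_mx3 !mx3_mul !mx3_tr; conj_simpl.
do 8 (apply/andP; split; first by apply/eqP; ring: (@Hi C)).
done.
Qed.

Lemma pic (lam a1 a2 a3 : C) (v : 'cV[C]_2) : lam != 0 -> a1 != 0 -> a2 != 0 -> a3 != 0 -> v != 0 ->
  PIC (Qgrp C) (Mobs (Mseed a1 a2 a3 v)).
Proof.
move=> l0 a10 a20 a30 v0 r1 r2 [_ [_ rk1]] [_ [_ rk2]] neq.
case: (boolP (has (fun x => \tr (r1 *m Mobs (Mseed a1 a2 a3 v) x) != \tr (r2 *m Mobs (Mseed a1 a2 a3 v) x)) (Qgrp C))).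
  by case/hasP => x xin xne; exists x.
move/hasPn => H; exfalso.
have HX : forall L, \tr (Tmx lam *m L) = 0 -> \tr ((r1 - r2) *m L) = 0.
  move=> L /(@span_rev C lam a1 a2 a3 v L l0 a10 a20 a30 v0) [c ->].
  rewrite mulmx_sumr big_seq.
  elim/big_rec: _ => [|g S gin IH]; first by rewrite mxtrace0.
  rewrite mxtraceD IH addr0 -scalemxAr mxtraceZ mulmxBl raddfB /=.
  by have := H g gin; rewrite negbK => /eqP ->; rewrite subrr mulr0.
move: HX; set X := r1 - r2 => HX.
have tT : forall l00 l01 l02 l10 l11 l12 l20 l21 l22 : C,
   \tr (Tmx lam *m mx3 l00 l01 l02 l10 l11 l12 l20 l21 l22) = 2%:R * lam * l00 - lam * l11 - lam * l22.
  by move=> *; rewrite /Tmx block_mx3 !mxE /= !mulr1n !mulr0n mx3_mul mx3_tr; ring.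
have tX : forall l00 l01 l02 l10 l11 l12 l20 l21 l22 : C,
   \tr (X *m mx3 l00 l01 l02 l10 l11 l12 l20 l21 l22) =
   X o0 o0 * l00 + X o0 o1 * l10 + X o0 o2 * l20 + X o1 o0 * l01 + X o1 o1 * l11
   + X o1 o2 * l21 + X o2 o0 * l02 + X o2 o1 * l12 + X o2 o2 * l22.
  by move=> *; rewrite {1}(mx3_eta X) mx3_mul mx3_tr; ring.
have get : forall l00 l01 l02 l10 l11 l12 l20 l21 l22 : C,
   2%:R * lam * l00 - lam * l11 - lam * l22 = 0 ->
   X o0 o0 * l00 + X o0 o1 * l10 + X o0 o2 * l20 + X o1 o0 * l01 + X o1 o1 * l11
   + X o1 o2 * l21 + X o2 o0 * l02 + X o2 o1 * l12 + X o2 o2 * l22 = 0.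
  by move=> l00 l01 l02 l10 l11 l12 l20 l21 l22 h; rewrite -tX; apply: HX; rewrite tT.
have e01 : X o0 o1 = 0 :> C.
  by have := get 0 0 0 1 0 0 0 0 0 ltac:(ring) => h; rewrite -[RHS]h; ring.
have e02 : X o0 o2 = 0 :> C.
  by have := get 0 0 0 0 0 0 1 0 0 ltac:(ring) => h; rewrite -[RHS]h; ring.
have e10 : X o1 o0 = 0 :> C.
  by have := get 0 1 0 0 0 0 0 0 0 ltac:(ring) => h; rewrite -[RHS]h; ring.
have e12 : X o1 o2 = 0 :> C.
  by have := get 0 0 0 0 0 0 0 1 0 ltac:(ring) => h; rewrite -[RHS]h; ring.
have e20 : X o2 o0 = 0 :> C.
  by have := get 0 0 1 0 0 0 0 0 0 ltac:(ring) => h; rewrite -[RHS]h; ring.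
have e21 : X o2 o1 = 0 :> C.
  by have := get 0 0 0 0 0 1 0 0 0 ltac:(ring) => h; rewrite -[RHS]h; ring.
have d1 : X o0 o0 + 2%:R * X o1 o1 = 0 :> C.
  by have := get 1 0 0 0 2%:R 0 0 0 0 ltac:(ring) => h; rewrite -[RHS]h; ring.
have d2 : X o0 o0 + 2%:R * X o2 o2 = 0 :> C.
  by have := get 1 0 0 0 0 0 0 0 2%:R ltac:(ring) => h; rewrite -[RHS]h; ring.
have e22 : X o2 o2 = X o1 o1.
  have : 2%:R * (X o2 o2 - X o1 o1) = 0 :> C by rewrite -[RHS](subrr 0) -{1}d2 -d1; ring.
  by move/eqP; rewrite mulf_eq0 pnatr_eq0 /= subr_eq0 => /eqP.
have e00 : X o0 o0 = - (2%:R * X o1 o1) :> C.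
  by apply/eqP; rewrite -subr_eq0 opprK; apply/eqP.
have EX : X = mx3 (- (2%:R * X o1 o1)) 0 0 0 (X o1 o1) 0 0 0 (X o1 o1).
  by rewrite {1}(mx3_eta X) e00 e01 e02 e10 e12 e20 e21 e22.
have [x0|xn0] := eqVneq (X o1 o1) 0.
  apply: neq; apply/eqP; rewrite -subr_eq0; apply/eqP.
  by rewrite -/X EX x0 mulr0 oppr0 [RHS]mx3_0.
have Xu : X \in unitmx.
  have [] := @mulmx1_unit _ _ X (mx3 (- (2%:R * X o1 o1))^-1 0 0 0 (X o1 o1)^-1 0 0 0 (X o1 o1)^-1) => //.
  rewrite {1}EX mx3_mul mx3_scalar; apply: mx3_eq; field;
    rewrite ?oppr_eq0 ?mulf_eq0 ?pnatr_eq0 ?(negbTE xn0) //.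
have rkX := mxrank_unit Xu.
have : (\rank X <= \rank r1 + \rank (- r2))%N.
  apply: leq_trans (mxrank_adds_leqif r1 (-r2)).1.
  by apply: mxrankS; apply: addmx_sub_adds; apply: submx_refl.
by rewrite mxrank_opp rk1 rk2 rkX.
Qed.

End S3.

Theorem proposition6 (C : numClosedFieldType) (lam a1 a2 a3 : C) (v : 'cV[C]_2) :
  0 < lam ->
  a1 \is Num.real -> a2 \is Num.real -> a3 \is Num.real ->
  a1 != 0 -> a2 != 0 -> a3 != 0 -> v != 0 ->
  psd (Mseed a1 a2 a3 v) ->
  let Mo := Mobs (Mseed a1 a2 a3 v) in
  [/\ observable (Qgrp C) Mo,
      covariant (Qgrp C) (@Urep C) Mo,
      (forall L : 'M[C]_(1 + 2),
         (exists c : 'M[C]_2 -> C, L = \sum_(g <- Qgrp C) c g *: Mo g)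
         <-> \tr (Tmx lam *m L) = 0),
      PIC (Qgrp C) Mo
    & size (Qgrp C) = 8%N].
Proof.
move=> lpos _ _ _ a10 a20 a30 v0 psdM Mo.
have l0 : lam != 0 by rewrite (gt_eqF lpos).
split.
- split; first by rewrite QgE; exact: uniqQg.
  split; first by move=> x _; exact: psd_conj.
  exact: sum1.
- by move=> g x _ _; exact: cov.
- move=> L; split.
    case=> c ->; rewrite mulmx_sumr big_seq.
    elim/big_rec: _ => [|g S gin IH]; first by rewrite mxtrace0.
    by rewrite mxtraceD IH addr0 -scalemxAr mxtraceZ (trQ _ _ _ _ _ gin) mulr0.
  exact: (@span_rev C lam a1 a2 a3 v L l0 a10 a20 a30 v0).
- exact: (pic l0 a10 a20 a30 v0).
- by rewrite QgE.
Qed.
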